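(* Let $G$, $\mathrm{b}$, $(w_{ij})$ with all $w_{ij}\le 0$, $H^*$, $U(H^* )$ and $(y^*,\lambda^* )$ be as in the context, and assume the LP relaxation (Primal LP') has no fractional solution. Then for any alternating path $P$ (with respect to $H^*$) whose endpoints belong to $U(H^* )$, there exists an edge $\{i,j\}\in P$ with $|w_{ij}+y_i^*+y_j^*|>0$.
   Context: Let $G=(V,E)$ be a finite undirected simple graph, $V=\{1,\dots,n\}$, with real edge weights $w_{ij}\le0$ and positive integers $b_i\le\deg_G(i)$; $N(i)$ is the neighbour set of $i$. A $\mathrm{b}$-matching is a set of edges in which each vertex $i$ has degree at most $b_i$; $H^*$ is a minimum weight $\mathrm{b}$-matching, and $U(H^* )$ is the set of vertices $i$ with $\deg_{H^*}(i)<b_i$. Primal LP': minimize $\sum w_{ij}x_{ij}$ s.t. $\sum_{j\in N(i)}x_{ij}\le b_i$, $0\le x_{ij}\le1$. Dual LP': maximize $-\sum_ib_iy_i-\sum\lambda_{ij}$ s.t. $w_{ij}+\lambda_{ij}\ge-y_i-y_j$, $\lambda_{ij}\ge0$ (and $y_i\ge0$). ''No fractional solution'' means every optimal solution of Primal LP' lies in $\{0,1\}^E$. $(y^*,\lambda^* )$ is an optimal solution of Dual LP'. A walk $P=(i_1,\dots,i_k)$ in $G$ is an alternating path (w.r.t. $H^*$) if (a) either all odd edges $\{i_1,i_2\},\{i_3,i_4\},\dots$ are in $H^*$ and all even edges $\{i_2,i_3\},\{i_4,i_5\},\dots$ are not, or vice versa; and (b) $i_r\neq i_{r+1}$ and $i_r\neq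 i_{r+2}$ for $1\le r\le k-2$ (vertices and edges may be revisited but no edge is repeated immediately). *)

(* Defs.v *)
From mathcomp Require Import all_boot all_order all_algebra.
From mathcomp Require Import reals.
Set Implicit Arguments. Unset Strict Implicit. Unset Printing Implicit Defensive.
Import Order.TTheory GRing.Theory Num.Theory.
Local Open Scope ring_scope.

Section Defs.
Variable R : realType.
Variable V : finType.

Definition simple_graph (E : {set {set V}}) : Prop :=
  forall e, e \in E -> #|e| = 2%N.

Definition incident (A : {set {set V}}) (i : V) : {set {set V}} :=
  [set e in A | i \in e].
Definition deg (A : {set {set V}}) (i : V) : nat := #|incident A i|.

Definition is_bmatching (E : {set {set V}}) (b : V -> nat) (H : {set {set V}}) : Prop :=
  H \subset E /\ forall i, (deg H i <= b i)%N.

Definition weight (w : {set V} -> R) (H : {set {set V}}) : R := \sum_(e in H) w e.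

Definition min_weight_bmatching (E : {set {set V}}) (b : V -> nat) (w : {set V} -> R) H : Prop :=
  is_bmatching E b H /\
  forall H', is_bmatching E b H' -> weight w H <= weight w H'.

Definition unsat (b : V -> nat) (H : {set {set V}}) : {set V} :=
  [set i | (deg H i < b i)%N].

Definition primal_feasible (E : {set {set V}}) (b : V -> nat) (x : {set V} -> R) : Prop :=
  (forall e, e \in E -> 0 <= x e <= 1) /\
  forall i, \sum_(e in E | i \in e) x e <= (b i)%:R.
Definition primal_obj (E : {set {set V}}) (w x : {set V} -> R) : R := \sum_(e in E) w e * x e.
Definition primal_optimal (E : {set {set V}}) (b : V -> nat) (w : {set V} -> R) (x : {set V} -> R) : Prop :=
  primal_feasible E b x /\
  forall x', primal_feasible E b x' -> primal_obj E w x <= primal_obj E w x'.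

Definition no_fractional_solution (E : {set {set V}}) (b : V -> nat) (w : {set V} -> R) : Prop :=
  forall x, primal_optimal E b w x -> forall e, e \in E -> x e = 0 \/ x e = 1.

Definition dual_feasible (E : {set {set V}}) (w : {set V} -> R) (y : V -> R) (lam : {set V} -> R) : Prop :=
  (forall i, 0 <= y i) /\
  (forall e, e \in E -> 0 <= lam e) /\
  (forall i j, [set i; j] \in E -> - y i - y j <= w [set i; j] + lam [set i; j]).
Definition dual_obj (E : {set {set V}}) (b : V -> nat) (y : V -> R) (lam : {set V} -> R) : R :=
  - (\sum_i (b i)%:R * y i) - \sum_(e in E) lam e.
Definition dual_optimal (E : {set {set V}}) (b : V -> nat) (w : {set V} -> R) (y : V -> R) (lam : {set V} -> R) : Prop :=
  dual_feasible E w y lam /\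
  forall y' lam', dual_feasible E w y' lam' -> dual_obj E b y' lam' <= dual_obj E b y lam.

(* A walk is given as i0 :: p, i.e. vertices v_0 = i0, v_1, ..., v_(size p). *)
Definition wv (i0 : V) (p : seq V) (r : nat) : V := nth i0 (i0 :: p) r.
Definition wedge (i0 : V) (p : seq V) (r : nat) : {set V} := [set wv i0 p r; wv i0 p r.+1].

Definition alternating_path (E : {set {set V}}) (H : {set {set V}}) (i0 : V) (p : seq V) : Prop :=
  [/\ p != [::],
      forall r, (r < size p)%N -> wedge i0 p r \in E,
      exists c : bool, forall r, (r < size p)%N -> (wedge i0 p r \in H) = (odd r == c)
    & forall r, (r.+2 <= size p)%N ->
        wv i0 p r != wv i0 p r.+1 /\ wv i0 p r != wv i0 p r.+2].

End Defs.

(* Main.v *)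
From mathcomp Require Import all_boot all_order all_algebra.
Require Import Defs.
From mathcomp Require Import reals.
From mathcomp Require Import ring lra.
Import Order.TTheory GRing.Theory Num.Theory.
Local Open Scope ring_scope.

Section Farkas.
Variables (R : realFieldType) (D K : finType).
Definition dot (u v : D -> R) := \sum_j u j * v j.

Lemma dotBl (u v z : D -> R) s : dot (fun j => u j - s * v j) z = dot u z - s * dot v z.
Proof.
rewrite /dot mulr_sumr -sumrB; apply: eq_bigr => j _; ring.
Qed.

Lemma dotBr (u v z : D -> R) s : dot z (fun j => u j - s * v j) = dot z u - s * dot z v.
Proof.
rewrite /dot mulr_sumr -sumrB; apply: eq_bigr => j _; ring.
Qed.

Lemma farkas (r : seq K) : uniq r -> forall (a : K -> D -> R) (c : D -> R),
 (exists u : K -> R, (forall k, 0 <= u k) /\ forall j, c j = \sum_(k <- r) u k * a k j)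
 \/ (exists d, (forall k, k \in r -> 0 <= dot (a k) d) /\ dot c d < 0).
Proof.
elim: r => [_ a c|k r IH].
  case: (boolP [forall j, c j == 0]) => [/forallP h|/forallPn [j hj]].
    left; exists (fun _ => 0); split => // j; rewrite big_nil; exact/eqP.
  right; exists (fun j => - c j); split => //.
  rewrite /dot; under eq_bigr do rewrite mulrN; rewrite sumrN oppr_lt0.
  rewrite (bigD1 j) //=; apply: (@lt_le_trans _ _ (c j * c j)).
    by rewrite lt_def mulf_neq0 //= -expr2 sqr_ge0.
  rewrite lerDl; apply: sumr_ge0 => i _; rewrite -expr2; exact: sqr_ge0.
rewrite cons_uniq => /andP[knr ur] a c.
case: (IH ur a c) => [[u [u0 hu]]|[d [hd cd]]].
  left; exists (fun x => if x == k then 0 else u x); split.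
    by move=> x; case: (x == k).
  move=> j; rewrite big_cons eqxx mul0r add0r hu; apply: eq_big_seq => x xr.
  by have -> : (x == k) = false by apply/eqP => ek; move: knr; rewrite -ek xr.
have [ak|ak] := lerP 0 (dot (a k) d).
  right; exists d; split => // x; rewrite in_cons => /orP[/eqP->|]//; exact: hd.
set al := dot (a k) d.
have aln : al != 0 by rewrite lt_eqF.
pose a' := fun x j => a x j - dot (a x) d / al * a k j.
pose c' := fun j => c j - dot c d / al * a k j.
case: (IH ur a' c') => [[u [u0 hu]]|[d' [hd' cd']]].
  pose T := (dot c d - \sum_(x <- r) u x * dot (a x) d) / al.
  left; exists (fun x => if x == k then T else u x); split.
    move=> x; case: (x == k) => //; rewrite /T; apply: mulr_le0; last first.
      by rewrite ltW // invr_lt0.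
    rewrite subr_le0; apply: le_trans (ltW cd) _; rewrite big_seq.
    by apply: sumr_ge0 => z zr; apply: mulr_ge0; [exact: u0| exact: hd].
  move=> j; rewrite big_cons eqxx.
  have -> : \sum_(x <- r) (if x == k then T else u x) * a x j =
            \sum_(x <- r) u x * a x j.
    apply: eq_big_seq => x xr.
    by have -> : (x == k) = false by apply/eqP => ek; move: knr; rewrite -ek xr.
  have := hu j; rewrite /c' /a'.
  have -> : \sum_(k0 <- r) u k0 * (a k0 j - dot (a k0) d / al * a k j) =
     \sum_(k0 <- r) u k0 * a k0 j - (\sum_(x <- r) u x * dot (a x) d) / al * a k j.
    rewrite -mulrA mulr_suml -sumrB; apply: eq_bigr => x _; ring.
  rewrite /T => e; rewrite mulrBl mulrBl; lra.
right; exists (fun j => d' j - dot (a k) d' / al * d j); split.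
  move=> x; rewrite in_cons => /orP[/eqP->|xr].
    by rewrite dotBr -/al mulfVK // subrr.
  have := hd' x xr; rewrite /a' dotBl dotBr.
  suff -> : dot (a x) d / al * dot (a k) d' = dot (a k) d' / al * dot (a x) d by [].
  ring.
have := cd'; rewrite /c' dotBl dotBr.
suff -> : dot c d / al * dot (a k) d' = dot (a k) d' / al * dot c d by [].
ring.
Qed.

Lemma small_step (s g : K -> R) : (forall k, 0 <= s k) ->
  (forall k, s k = 0 -> 0 <= g k) -> exists2 t, 0 < t & forall k, 0 <= s k + t * g k.
Proof.
move=> s0 sg.
pose M := \sum_k (if 0 < s k then `|g k| / s k else 0).
have M0 : 0 <= M by apply: sumr_ge0 => k _; case: ifP => // /ltW h; apply: divr_ge0.
exists (1 + M)^-1; first by rewrite invr_gt0; lra.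
move=> k; have [sk0|skp] := eqVneq (s k) 0.
  by rewrite sk0 add0r mulr_ge0 ?invr_ge0 ?sg //; lra.
have skp' : 0 < s k by rewrite lt_neqAle eq_sym skp s0.
have h1 : `|g k| / s k <= M.
  rewrite /M (bigD1 k) //= skp' lerDl; apply: sumr_ge0 => i _.
  by case: ifP => // /ltW h; apply: divr_ge0.
have h2 : `|g k| <= s k * (1 + M).
  move: h1; rewrite ler_pdivrMr // => h; nra.
have h3 : - g k <= `|g k| by rewrite -normrN ler_norm.
have h4 : `|g k| * (1 + M)^-1 <= s k by rewrite ler_pdivrMr //; lra.
have h5 : 0 < (1 + M)^-1 by rewrite invr_gt0; lra.
nra.
Qed.
End Farkas.
Arguments dot {R D}.
Arguments farkas {R D K}.
Arguments small_step {R K}.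
Section LP.
Variables (R : realType) (V : finType) (E : {set {set V}}) (b : V -> nat)
  (w : {set V} -> R) (y : V -> R) (lam : {set V} -> R).
Hypothesis sg : simple_graph E.

Lemma edge2 e : e \in E -> exists i j, i != j /\ e = [set i; j].
Proof. by move=> /sg /eqP /cards2P. Qed.

Lemma sum2 (f : V -> R) i j : i != j -> \sum_(v in [set i; j]) f v = f i + f j.
Proof. by move=> ij; rewrite big_setU1 ?big_set1 // in_set1. Qed.

Definition slk e := w e + lam e + \sum_(v in e) y v.

Lemma slk_ge0 : dual_feasible E w y lam -> forall e, e \in E -> 0 <= slk e.
Proof.
move=> [_ [_ h]] e eE; have [i [j [ij ee]]] := edge2 e eE.
have := h i j; rewrite -ee => /(_ eE); rewrite /slk ee sum2 //; lra.
Qed.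

Lemma gap (x : {set V} -> R) :
  primal_obj E w x - dual_obj E b y lam =
  \sum_(e in E) x e * slk e + \sum_(e in E) lam e * (1 - x e) +
  \sum_v y v * ((b v)%:R - \sum_(e in E | v \in e) x e).
Proof.
have key : \sum_(e in E) x e * \sum_(v in e) y v =
           \sum_v y v * \sum_(e in E | v \in e) x e.
  under eq_bigr do rewrite mulr_sumr.
  under [RHS]eq_bigr do rewrite mulr_sumr.
  rewrite (exchange_big_dep xpredT) //=.
  apply: eq_bigr => v _; rewrite big_mkcondr /= [RHS]big_mkcond /=.
  rewrite [LHS]big_mkcond /=; apply: eq_bigr => e _.
  by case: (e \in E); case: (v \in e) => //=; rewrite mulrC.
rewrite /primal_obj /dual_obj /slk.
under [X in _ = X + _ + _]eq_bigr do rewrite !mulrDr.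
rewrite !big_split /= key.
under [X in _ = _ + X + _]eq_bigr do rewrite mulrBr mulr1.
rewrite sumrB.
under [X in _ = _ + _ + X]eq_bigr do rewrite mulrBr.
rewrite sumrB.
have -> : \sum_(i in E) x i * lam i = \sum_(i in E) lam i * x i.
  by apply: eq_bigr => e _; rewrite mulrC.
have -> : \sum_(i in E) x i * w i = \sum_(i in E) w i * x i.
  by apply: eq_bigr => e _; rewrite mulrC.
have -> : \sum_i y i * (b i)%:R = \sum_i (b i)%:R * y i.
  by apply: eq_bigr => e _; rewrite mulrC.
ring.
Qed.

Lemma gap_ge0 x : dual_feasible E w y lam -> primal_feasible E b x ->
  [/\ forall e, e \in E -> 0 <= x e * slk e,
      forall e, e \in E -> 0 <= lam e * (1 - x e) &
      forall v, 0 <= y v * ((b v)%:R - \sum_(e in E | v \in e) x e)].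
Proof.
move=> df [xb xv]; split.
- move=> e eE; have /andP[h1 h2] := xb e eE; apply: mulr_ge0 => //.
  exact: slk_ge0.
- move=> e eE; have /andP[h1 h2] := xb e eE; case: df => [_ [h _]].
  by apply: mulr_ge0; [exact: h| lra].
- move=> v; case: df => [h _]; apply: mulr_ge0 => //; rewrite subr_ge0; exact: xv.
Qed.

Lemma weak_duality x : dual_feasible E w y lam -> primal_feasible E b x ->
  dual_obj E b y lam <= primal_obj E w x.
Proof.
move=> df xf; rewrite -subr_ge0 gap; have [h1 h2 h3] := gap_ge0 x df xf.
apply: addr_ge0; [apply: addr_ge0|]; apply: sumr_ge0 => *; auto.
Qed.


Lemma sum_delta (T : finType) (f : T -> R) i : \sum_x f x * (i == x)%:R = f i.
Proof.
rewrite (bigD1 i) //= eqxx mulr1 big1 ?addr0 // => x /negbTE.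
by rewrite eq_sym => ->; rewrite mulr0.
Qed.

Lemma sum_mem (T : finType) (f : T -> R) (A : {set T}) :
  \sum_x f x * (x \in A)%:R = \sum_(x in A) f x.
Proof.
by rewrite [RHS]big_mkcond; apply: eq_bigr => x _; case: (x \in A); rewrite ?mulr1 ?mulr0.
Qed.

Lemma exists_primal : dual_optimal E b w y lam ->
  exists x, primal_feasible E b x /\ primal_obj E w x = dual_obj E b y lam.
Proof.
move=> [df dopt].
pose s : (V + {set V} + {set V})%type -> R := fun k =>
  match k with inl (inl i) => y i | inl (inr e) => if e \in E then lam e else 1
  | inr e => if e \in E then slk e else 1 end.
pose vec : (V + {set V} + {set V})%type -> (V + {set V})%type -> R := fun k z =>
  match k, z with
  | inl (inl i), inl v => (i == v)%:R
  | inl (inr e), inr e' => (e == e')%:R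
  | inr e, inl v => (v \in e)%:R
  | inr e, inr e' => (e == e')%:R
  | _, _ => 0 end.
pose a k := if s k == 0 then vec k else (fun _ => 0 : R).
pose c : (V + {set V})%type -> R := fun z =>
  match z with inl v => (b v)%:R | inr e => (e \in E)%:R end.
have s0 : forall k, 0 <= s k.
  case=> [[i|e]|e] /=; first by case: df.
    by case: ifP => eE //; case: df => _ [h _]; exact: h.
  by case: ifP => eE //; apply: slk_ge0.
have dY i d : dot (vec (inl (inl i))) d = d (inl i).
  rewrite /dot big_sumType /= [X in _ + X]big1 ?addr0; last by move=> *; rewrite mul0r.
  by under eq_bigr do rewrite mulrC; rewrite sum_delta.
have dL e d : dot (vec (inl (inr e))) d = d (inr e).
  rewrite /dot big_sumType /= [X in X + _]big1 ?add0r; last by move=> *; rewrite mul0r.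
  by under eq_bigr do rewrite mulrC; rewrite sum_delta.
have dC e d : dot (vec (inr e)) d = \sum_(v in e) d (inl v) + d (inr e).
  rewrite /dot big_sumType /=; congr (_ + _).
    by under eq_bigr do rewrite mulrC; rewrite sum_mem.
  by under eq_bigr do rewrite mulrC; rewrite sum_delta.
have dc d : dot c d = \sum_v (b v)%:R * d (inl v) + \sum_(e in E) d (inr e).
  rewrite /dot big_sumType /=; congr (_ + _).
  by under eq_bigr do rewrite mulrC; rewrite sum_mem.
case: (farkas _ (enum_uniq (T:=(V + {set V} + {set V})%type) predT) a c)
   => [[u [u0 hu]]|[d [hd cd]]]; last first.
  have hss : forall k, s k = 0 -> 0 <= dot (vec k) d.
    move=> k sk0; have := hd k (mem_enum _ k); by rewrite /a sk0 eqxx.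
  have [t t0 ht] := small_step s (fun k => dot (vec k) d) s0 hss.
  pose y' v := y v + t * d (inl v); pose lam' e := lam e + t * d (inr e).
  have df' : dual_feasible E w y' lam'.
    split; [|split].
    - by move=> i; have := ht (inl (inl i)); rewrite /= dY.
    - by move=> e eE; have := ht (inl (inr e)); rewrite /= eE dL.
    - move=> i j eE; have := ht (inr [set i; j]); rewrite /= eE dC /slk.
      have ij : i != j.
        apply/eqP => ij; move: (sg _ eE); rewrite ij setUid cards1.
        by [].
      rewrite !sum2 // /y' /lam'; lra.
  have := dopt y' lam' df'.
  have e1 : \sum_i (b i)%:R * y' i =
     \sum_i (b i)%:R * y i + t * \sum_i (b i)%:R * d (inl i).
    by rewrite mulr_sumr -big_split /=; apply: eq_bigr => i _; rewrite /y'; ring.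
  have e2 : \sum_(e in E) lam' e = \sum_(e in E) lam e + t * \sum_(e in E) d (inr e).
    by rewrite mulr_sumr -big_split /=; apply: eq_bigr => i _; rewrite /lam'; ring.
  rewrite /dual_obj e1 e2; move: cd; rewrite dc => cd.
  have : 0 < t * - (\sum_v (b v)%:R * d (inl v) + \sum_(e in E) d (inr e)).
    by apply: mulr_gt0 => //; lra.
  rewrite mulrN mulrDr => h1 h2; lra.
pose U k := if s k == 0 then u k else 0.
have hU : forall j, c j = \sum_k U k * vec k j.
  move=> j; rewrite hu big_enum; apply: eq_bigr => k _; rewrite /U /a.
  by case: ifP => _; rewrite ?mul0r ?mulr0.
have U0 : forall k, 0 <= U k by move=> k; rewrite /U; case: ifP.
have Us : forall k, U k * s k = 0.
  by move=> k; rewrite /U; case: ifP => [/eqP ->|]; rewrite ?mulr0 ?mul0r.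
pose x e := U (inr e).
have hv : forall v, (b v)%:R = U (inl (inl v)) + \sum_e x e * (v \in e)%:R.
  move=> v; have /= -> := hU (inl v); rewrite !big_sumType /= [X in _ + X + _ = _]big1 ?addr0.
    by under eq_bigr do rewrite eq_sym; rewrite sum_delta.
  by move=> *; rewrite mulr0.
have he : forall e, (e \in E)%:R = U (inl (inr e)) + x e.
  move=> e; have /= -> := hU (inr e); rewrite !big_sumType /= [X in X + _ + _ = _]big1 ?add0r.
    under eq_bigr do rewrite eq_sym.
    by under [X in _ + X]eq_bigr do rewrite eq_sym; rewrite !sum_delta.
  by move=> *; rewrite mulr0.
have xnE : forall e, e \notin E -> x e = 0.
  move=> e /negbTE eE; rewrite /x /U /= eE.
  by have -> : ((1 : R) == 0) = false by rewrite oner_eq0.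
have hv' : forall v, \sum_(e in E | v \in e) x e = (b v)%:R - U (inl (inl v)).
  move=> v; rewrite hv.
  have -> : U (inl (inl v)) + \sum_e x e * (v \in e)%:R - U (inl (inl v)) =
    \sum_e x e * (v \in e)%:R by ring.
  rewrite big_mkcondr /= [LHS]big_mkcond /=.
  apply: eq_bigr => e _; case eE: (e \in E); case: (v \in e);
    rewrite ?mulr1 ?mulr0 //.
  by rewrite xnE ?eE.
exists x; split.
  split.
    move=> e eE; apply/andP; split; first exact: U0.
    have := he e; rewrite eE /= => h; have := U0 (inl (inr e)); lra.
  by move=> v; rewrite hv'; have := U0 (inl (inl v)); lra.
apply/eqP; rewrite -subr_eq0 gap.
rewrite big1 ?add0r; last first.
  move=> e eE; have := Us (inr e); by rewrite /= eE.
rewrite big1 ?add0r; last first.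
  move=> e eE; have := Us (inl (inr e)); have := he e; rewrite /= eE => h.
  have -> : 1 - x e = U (inl (inr e)) by rewrite -[1]/(true%:R) h; ring.
  by rewrite mulrC.
rewrite big1 //= => v _; rewrite hv'.
have := Us (inl (inl v)); rewrite /= => h.
have -> : (b v)%:R - ((b v)%:R - U (inl (inl v))) = U (inl (inl v)) by ring.
by rewrite mulrC.
Qed.

End LP.
Arguments exists_primal {R V E b w y lam}.
Arguments weak_duality {R V E b w y lam}.
Arguments gap {R V E b w y lam}.
Arguments gap_ge0 {R V E b w y lam}.
Arguments slk {R V w y lam}.

Section Path.
Variables (R : realType) (V : finType) (E : {set {set V}}) (w : {set V} -> R).
Hypothesis sg : simple_graph E.

Lemma sum_ind (H0 : {set {set V}}) i : H0 \subset E ->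
  \sum_(e in E | i \in e) (e \in H0)%:R = (deg H0 i)%:R :> R.
Proof.
move=> sub.
have -> : \sum_(e in E | i \in e) (e \in H0)%:R =
          \sum_(e | ((e \in E) && (i \in e)) && (e \in H0)) (1 : R).
  by rewrite [RHS]big_mkcondr /=; apply: eq_bigr => e _; case: (e \in H0).
rewrite sumr_const /deg /incident; congr (_ *+ _).
apply: eq_card => e; rewrite !inE.
by rewrite -topredE /=; case eH: (e \in H0); rewrite ?andbF ?andbT //= (subsetP sub _ eH).
Qed.

Lemma wsum_ind (H0 : {set {set V}}) : H0 \subset E ->
  \sum_(e in E) w e * (e \in H0)%:R = weight w H0.
Proof.
move=> sub; rewrite /weight [RHS]big_mkcond [LHS]big_mkcond /=.
apply: eq_bigr => e _; case eH: (e \in H0); case eE: (e \in E);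
  rewrite ?mulr1 ?mulr0 //.
by rewrite (subsetP sub _ eH) in eE.
Qed.

Lemma sum_pt (F : {set V} -> R) f : f \in E ->
  \sum_(e in E) F e * (f == e)%:R = F f.
Proof.
move=> fE; rewrite (bigD1 f) //= eqxx mulr1 big1 ?addr0 //.
by move=> e /andP[_ ne]; rewrite eq_sym (negbTE ne) mulr0.
Qed.

Lemma sum_ptv f i : f \in E ->
  \sum_(e in E | i \in e) (f == e)%:R = (i \in f)%:R :> R.
Proof.
move=> fE; case hi: (i \in f).
  rewrite (bigD1 f) /=; last by rewrite fE hi.
  by rewrite eqxx big1 ?addr0 // => e /andP[_ ne]; rewrite eq_sym (negbTE ne).
apply: big1 => e /andP[_ ie]; case: eqP => // fe.
by rewrite fe ie in hi.
Qed.

Lemma tele (s f : nat -> R) k : (0 < k)%N -> (forall r, s r.+1 = - s r) ->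
  \sum_(r < k) s r * (f r + f r.+1) = s 0%N * f 0%N + s k.-1 * f k.
Proof.
case: k => // n _ hs; elim: n => [|n IH]; first by rewrite big_ord1 /= mulrDr.
rewrite big_ord_recr /= IH hs; ring.
Qed.
End Path.
Arguments sum_ind {R V E}.
Arguments wsum_ind {R V E}.
Arguments sum_pt {R V E}.
Arguments sum_ptv {R V E}.
Arguments tele {R}.

Theorem lemma6 (R : realType) (V : finType) (E : {set {set V}}) (b : V -> nat)
    (w : {set V} -> R) (H : {set {set V}}) (y : V -> R) (lam : {set V} -> R)
    (i0 : V) (p : seq V) :
  simple_graph E ->
  (forall i, 0 < b i <= deg E i)%N ->
  (forall e, e \in E -> w e <= 0) ->
  min_weight_bmatching E b w H ->
  no_fractional_solution E b w ->
  dual_optimal E b w y lam ->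
  alternating_path E H i0 p ->
  i0 \in unsat b H -> last i0 p \in unsat b H ->
  exists2 r, (r < size p)%N &
    0 < `|w (wedge i0 p r) + y (wv i0 p r) + y (wv i0 p r.+1)|.
Proof.
move=> sg _ _ [[HsubE Hdeg] Hmin] nofrac dopt [pn0 hE [c hc] _] hu0 huk.
have df := dopt.1.
have [x [xf xobj]] := exists_primal sg dopt.
have optx : forall x', primal_feasible E b x' -> dual_obj E b y lam <= primal_obj E w x'.
  by move=> x' xf'; apply: weak_duality.
have xint : forall e, e \in E -> x e = 0 \/ x e = 1.
  by apply: nofrac; split => // x' xf'; rewrite xobj; exact: optx.
pose H0 := [set e in E | x e == 1].
have H0sub : H0 \subset E by apply/subsetP => e; rewrite inE => /andP[].
have xH0 : forall e, e \in E -> x e = (e \in H0)%:R.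
  move=> e eE; rewrite inE eE /=; case: (xint e eE) => ->; rewrite ?eqxx //.
  by rewrite eq_sym oner_eq0.
have H0bm : is_bmatching E b H0.
  split => // i; rewrite -(ler_nat R) -(sum_ind H0 i H0sub).
  have <- : \sum_(e in E | i \in e) x e = \sum_(e in E | i \in e) (e \in H0)%:R.
    by apply: eq_bigr => e /andP[eE _]; exact: xH0.
  exact: xf.2.
have wH0 : weight w H0 = dual_obj E b y lam.
  rewrite -xobj /primal_obj -(wsum_ind w H0 H0sub); apply: eq_bigr => e eE.
  by rewrite xH0.
pose xH (e : {set V}) := (e \in H)%:R : R.
have xHf : primal_feasible E b xH.
  split.
    by move=> e _; rewrite /xH; case: (e \in H); rewrite ?lexx ?ler01.
  by move=> i; rewrite sum_ind // ler_nat.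
have objH : primal_obj E w xH = weight w H by rewrite /primal_obj wsum_ind.
have eqH : primal_obj E w xH = dual_obj E b y lam.
  apply/eqP; rewrite eq_le optx // andbT objH -wH0; exact: Hmin.
have yU : forall v, v \in unsat b H -> y v = 0.
  move=> v; rewrite inE => vu.
  have := gap (E:=E) (b:=b) (w:=w) (y:=y) (lam:=lam) xH; rewrite eqH subrr => /esym g0.
  have [g1 g2 g3] := gap_ge0 sg xH df xHf.
  have s1 : 0 <= \sum_(e in E) xH e * slk (w:=w) (y:=y) (lam:=lam) e by apply: sumr_ge0.
  have s2 : 0 <= \sum_(e in E) lam e * (1 - xH e) by apply: sumr_ge0.
  have s3 : 0 <= \sum_v y v * ((b v)%:R - \sum_(e in E | v \in e) xH e).
    by apply: sumr_ge0 => *; exact: g3.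
  have z3 : \sum_v y v * ((b v)%:R - \sum_(e in E | v \in e) xH e) = 0 by lra.
  have := @psumr_eq0P _ _ _ _ (fun i _ => g3 i) z3 v isT.
  rewrite sum_ind // => /eqP; rewrite mulf_eq0 => /orP[/eqP //|].
  by rewrite subr_eq0 eqr_nat => /eqP eq; rewrite eq ltnn in vu.
have ye0 : y i0 = 0 := yU _ hu0.
have yek : y (last i0 p) = 0 := yU _ huk.
have kpos : (0 < size p)%N by case: p pn0 {hE hc hu0 huk yek}.
have wvk : wv i0 p (size p) = last i0 p.
  by rewrite /wv -[size p]/((size (i0 :: p)).-1) nth_last.
have wv0 : wv i0 p 0 = i0 by [].
case: (boolP [exists r : 'I_(size p),
   0 < `|w (wedge i0 p r) + y (wv i0 p r) + y (wv i0 p r.+1)|]) => [/existsP [r hr]|].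
  by exists r.
rewrite negb_exists => /forallP ntight.
have tight : forall r : 'I_(size p),
    w (wedge i0 p r) = - (y (wv i0 p r) + y (wv i0 p r.+1)).
  move=> r; have := ntight r; rewrite normr_gt0 negbK => /eqP h; lra.
pose sig (r : nat) : R := if odd r == c then -1 else 1.
have sigS : forall r, sig r.+1 = - sig r.
  by move=> r; rewrite /sig /=; case: (odd r); case: (c); rewrite /= ?opprK.
have sigH : forall r : 'I_(size p), sig r = if wedge i0 p r \in H then -1 else 1.
  by move=> r; rewrite /sig hc.
have sig1 : forall r (a : bool), sig r * a%:R <= 1.
  move=> r a; rewrite /sig; case: (odd r == c); case: a; rewrite /= ?mulr1n ?mulr0n;
    lra.
pose eps : R := ((size p).+1)%:R^-1.
pose m (e : {set V}) : R := \sum_(r < size p) (wedge i0 p r == e)%:R.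
pose xp (e : {set V}) : R :=
  (e \in H)%:R + eps * \sum_(r < size p) (wedge i0 p r == e)%:R * sig r.
have xpe : forall e, \sum_(r < size p) (wedge i0 p r == e)%:R * sig r =
    (if e \in H then -1 else 1) * m e.
  move=> e; rewrite /m mulr_sumr; apply: eq_bigr => r _.
  case: eqP => [<-|_]; rewrite ?mul0r ?mulr0 // mul1r mulr1 sigH //.
have m0 : forall e, 0 <= m e by move=> e; apply: sumr_ge0 => *; exact: ler0n.
have mk : forall e, m e <= (size p)%:R.
  move=> e; apply: (@le_trans _ _ (\sum_(r < size p) (1:R))).
    by apply: ler_sum => r _; case: eqP.
  by rewrite sumr_const card_ord.
have eps0 : 0 < eps by rewrite invr_gt0 ltr0n.
have epsk : eps * (size p)%:R < 1.
  by rewrite mulrC ltr_pdivrMr ?ltr0n // mul1r ltr_nat.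
have eps2 : eps * 2 <= 1.
  by rewrite mulrC ler_pdivrMr ?ltr0n // mul1r ler_nat ltnS.
have epsm : forall e, eps * m e < 1.
  move=> e; apply: le_lt_trans epsk; apply: ler_wpM2l; [exact: ltW| exact: mk].
have epsm0 : forall e, 0 <= eps * m e by move=> e; apply: mulr_ge0; [exact: ltW|].
have xpf : primal_feasible E b xp.
  split.
    move=> e _; rewrite /xp xpe; have := epsm e; have := epsm0 e.
    case: (e \in H); rewrite /= ?mulr1n ?mulr0n ?mulN1r ?mul1r ?mulrN => h1 h2;
      apply/andP; split; lra.
  move=> i.
  have vs : \sum_(e in E | i \in e) xp e = (deg H i)%:R +
      eps * \sum_(r < size p) sig r * (i \in wedge i0 p r)%:R.
    rewrite /xp big_split /= sum_ind // -mulr_sumr; congr (_ + eps * _).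
    rewrite exchange_big /=; apply: eq_bigr => r _.
    rewrite -(sum_ptv _ i (hE r (ltn_ord r))) mulr_sumr; apply: eq_bigr => e _.
    by rewrite mulrC.
  have inw : forall r : 'I_(size p), (i \in wedge i0 p r)%:R =
      (i == wv i0 p r)%:R + (i == wv i0 p r.+1)%:R :> R.
    move=> r; have := sg _ (hE r (ltn_ord r)); rewrite /wedge in_set2.
    case: (eqVneq (wv i0 p r) (wv i0 p r.+1)) => [->|ne].
      by rewrite setUid cards1.
    move=> _; case: (eqVneq i (wv i0 p r)) => [->|_].
      by rewrite (negbTE ne) /= addr0.
    by rewrite /= add0r.
  rewrite vs; under eq_bigr do rewrite inw.
  have := tele sig (fun t => (i == wv i0 p t)%:R) _ kpos sigS; move=> /= ->.
  rewrite wvk wv0.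
  have ex := sig1 0%N (i == i0); have ex2 := sig1 (size p).-1 (i == last i0 p).
  have ex3 : eps * (sig 0%N * (i == i0)%:R + sig (size p).-1 * (i == last i0 p)%:R) <= 1.
    apply: le_trans eps2; apply: ler_wpM2l; [exact: ltW| lra].
  case: (eqVneq i i0) => [ii|ni].
    have : (deg H i < b i)%N by move: hu0; rewrite inE ii.
    move=> hlt; have : (deg H i)%:R + 1 <= (b i)%:R :> R.
      by rewrite natr1 ler_nat.
    move: ex3; rewrite ii !eqxx; lra.
  case: (eqVneq i (last i0 p)) => [ii|nk].
    have : (deg H i < b i)%N by move: huk; rewrite inE ii.
    move=> hlt; have : (deg H i)%:R + 1 <= (b i)%:R :> R.
      by rewrite natr1 ler_nat.
    move: ex3; rewrite (negbTE ni) ii !eqxx; lra.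
  rewrite /= !mulr0 addr0 mulr0 addr0 ler_nat; exact: Hdeg.
have objp : primal_obj E w xp =
    weight w H + eps * \sum_(r < size p) sig r * w (wedge i0 p r).
  rewrite /primal_obj /xp; under eq_bigr do rewrite mulrDr.
  rewrite big_split /= wsum_ind //; congr (_ + _).
  under eq_bigr do rewrite mulrCA; rewrite -mulr_sumr; congr (eps * _).
  rewrite (eq_bigr (fun e => \sum_(r < size p) w e * ((wedge i0 p r == e)%:R * sig r))); last by move=> e _; rewrite mulr_sumr.
  rewrite exchange_big /=; apply: eq_bigr => r _.
  rewrite -(sum_pt (fun e => sig r * w e) _ (hE r (ltn_ord r))).
  by apply: eq_bigr => e _ /=; ring.
have S0 : \sum_(r < size p) sig r * w (wedge i0 p r) = 0.
  under eq_bigr => r _ do rewrite tight mulrN.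
  rewrite sumrN.
  have := tele sig (fun t => y (wv i0 p t)) _ kpos sigS; move=> /= ->.
  by rewrite wvk wv0 ye0 yek !mulr0 addr0 oppr0.
have xpopt : primal_optimal E b w xp.
  split => // x' xf'; rewrite objp S0 mulr0 addr0 -objH eqH; exact: optx.
have e0E : wedge i0 p 0 \in E := hE 0%N kpos.
have m1 : 1 <= m (wedge i0 p 0).
  rewrite /m (bigD1 (Ordinal kpos)) //= eqxx lerDl; apply: sumr_ge0 => *.
  exact: ler0n.
have := nofrac xp xpopt _ e0E; rewrite /xp xpe.
have := epsm (wedge i0 p 0).
have : eps * 1 <= eps * m (wedge i0 p 0) by apply: ler_wpM2l => //; exact: ltW.
rewrite mulr1 => h1 h2.
case: (wedge i0 p 0 \in H); rewrite /= ?mulr1n ?mulr0n ?mulN1r ?mul1r ?mulrN;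
  case=> h3; lra.
Qed.
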